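(* Let $R$ be a commutative Noetherian ring and $\alpha$ an automorphism of $R$ such that $R$ is $\alpha$-special, with $a$ an $\alpha$-special element. Let $S=R[\theta;\alpha]$. Then $(1-a\theta)S$ is a maximal right ideal of $S$. If in addition $\alpha$ has infinite order, then $S/(1-a\theta)S$ is a faithful simple right $S$-module.
   Context: $R[\theta;\alpha]$: skew polynomial ring with $\theta r=\alpha(r)\theta$. An ideal $I$ is $\alpha$-stable if $\alpha(I)=I$. For $a\in R$ and $n\ge1$ put $N_n^\alpha(a)=a\alpha(a)\cdots\alpha^{n-1}(a)$. $R$ is $\alpha$-special if there is $a\in R$ (an $\alpha$-special element) with $N_n^\alpha(a)\neq0$ for all $n\ge1$ and such that every nonzero $\alpha$-stable ideal of $R$ contains $N_n^\alpha(a)$ for some $n\ge1$. *)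

(* Defs.v *)
From HB Require Import structures.
From mathcomp Require Import all_boot all_order all_algebra.
Set Implicit Arguments. Unset Strict Implicit. Unset Printing Implicit Defensive.
Import GRing.Theory.
Local Open Scope ring_scope.

Section SkewDefs.
Variable R : comNzRingType.

Definition is_ideal (I : R -> Prop) : Prop :=
  [/\ I 0, (forall x y, I x -> I y -> I (x + y)) & (forall r x, I x -> I (r * x))].

Definition ideal_sub (I J : R -> Prop) := forall x, I x -> J x.

Definition noetherian : Prop :=
  forall I : nat -> R -> Prop,
    (forall n, is_ideal (I n)) ->
    (forall n, ideal_sub (I n) (I n.+1)) ->
    exists N, forall m, (N <= m)%N -> forall x, I m x <-> I N x.

Definition alpha_stable (alpha : R -> R) (I : R -> Prop) : Prop :=
  forall y, (exists2 x, I x & alpha x = y) <-> I y.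

Definition Nnorm (alpha : R -> R) (n : nat) (a : R) : R :=
  \prod_(i < n) iter i alpha a.

Definition alpha_special_elt (alpha : R -> R) (a : R) : Prop :=
  (forall n, (1 <= n)%N -> Nnorm alpha n a != 0) /\
  (forall I : R -> Prop, is_ideal I -> (exists x, I x /\ x != 0) ->
     alpha_stable alpha I -> exists2 n, (1 <= n)%N & I (Nnorm alpha n a)).

(* ---------- the skew polynomial ring S = R[theta; alpha] ----------
   Elements are represented by their coefficient polynomials
   sum_i p_i theta^i (coefficients on the left); addition is the
   polynomial addition and multiplication is determined by
   theta r = alpha(r) theta, i.e.
   (sum_i p_i theta^i)(sum_j q_j theta^j) = sum_{i,j} p_i alpha^i(q_j) theta^(i+j). *)
Definition skew_mul (alpha : R -> R) (p q : {poly R}) : {poly R} :=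
  \poly_(k < (size p + size q)%N)
     \sum_(i < k.+1) p`_i * iter i alpha q`_(k - i).

Definition theta : {poly R} := 'X.

Definition is_right_ideal (alpha : R -> R) (J : {poly R} -> Prop) : Prop :=
  [/\ J 0, (forall p q, J p -> J q -> J (p + q))
         & (forall p s, J p -> J (skew_mul alpha p s))].

Definition principal_right_ideal (alpha : R -> R) (f : {poly R}) : {poly R} -> Prop :=
  fun p => exists s, p = skew_mul alpha f s.

Definition maximal_right_ideal (alpha : R -> R) (I : {poly R} -> Prop) : Prop :=
  [/\ is_right_ideal alpha I,
      (exists p, ~ I p) &
      (forall J, is_right_ideal alpha J -> (forall p, I p -> J p) ->
         (forall p, J p <-> I p) \/ (forall p, J p))].

(* The right S-module S/I is simple: nonzero, and its only submodules are 0
   and itself; submodules of S/I are exactly (images of) right ideals J of S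
   containing I. *)
Definition simple_quotient (alpha : R -> R) (I : {poly R} -> Prop) : Prop :=
  (exists p, ~ I p) /\
  (forall J, is_right_ideal alpha J -> (forall p, I p -> J p) ->
     (forall p, J p <-> I p) \/ (forall p, J p)).

(* The right S-module S/I is faithful: its annihilator
   { s | (t + I) s = 0 for all t } = { s | t s \in I for all t } is zero. *)
Definition faithful_quotient (alpha : R -> R) (I : {poly R} -> Prop) : Prop :=
  forall s, (forall t, I (skew_mul alpha t s)) -> s = 0.

Definition infinite_order (alpha : R -> R) : Prop :=
  forall n, (1 <= n)%N -> exists x, iter n alpha x != x.

End SkewDefs.

(* Main.v *)
Require Import Defs.
From HB Require Import structures.
From mathcomp Require Import all_boot all_order all_algebra.
From mathcomp Require Import zify ring.
From Stdlib Require Import Classical.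
Set Implicit Arguments. Unset Strict Implicit. Unset Printing Implicit Defensive.
Import GRing.Theory.
Local Open Scope ring_scope.

Section S.
Variable R : comNzRingType.
Variable alpha : {rmorphism R -> R}.
Local Notation "p ** q" := (skew_mul alpha p q) (at level 40, left associativity).
Local Notation al n := (iter n alpha).

Lemma alM n x y : al n (x * y) = al n x * al n y.
Proof. by elim: n => //= n ->; rewrite rmorphM. Qed.
Lemma alD n x y : al n (x + y) = al n x + al n y.
Proof. by elim: n => //= n ->; rewrite rmorphD. Qed.
Lemma alN n x : al n (- x) = - al n x.
Proof. by elim: n => //= n ->; rewrite rmorphN. Qed.
Lemma alB n x y : al n (x - y) = al n x - al n y.
Proof. by rewrite alD alN. Qed.
Lemma al0 n : al n 0 = 0.
Proof. by elim: n => //= n ->; rewrite rmorph0. Qed.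
Lemma al1 n : al n 1 = 1.
Proof. by elim: n => //= n ->; rewrite rmorph1. Qed.
Lemma al_sum n m (F : 'I_m -> R) : al n (\sum_(i < m) F i) = \sum_(i < m) al n (F i).
Proof. exact: (big_morph _ (alD n) (al0 n)). Qed.

Lemma coef_skew p q k : (p ** q)`_k = \sum_(j < k.+1) p`_j * al j q`_(k - j).
Proof.
rewrite /skew_mul coef_poly; case: ltnP => // H; rewrite big1 // => j _.
have [lp|lp] := leqP (size p) j; first by rewrite nth_default ?mul0r.
rewrite [q`__]nth_default ?al0 ?mulr0 //; have jk : (j <= k)%N by rewrite (leq_trans (ltnW lp)) // (leq_trans _ H) // leq_addr.
  by rewrite leq_subRL // (leq_trans _ H) // leq_add2r ltnW.
Qed.

Lemma coef_skew_rev p q k :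
  (p ** q)`_k = \sum_(j < k.+1) p`_(k - j) * al (k - j) q`_j.
Proof.
rewrite coef_skew (reindex_inj rev_ord_inj) /=.
by apply: eq_bigr => j _; rewrite (sub_ordK j).
Qed.

Lemma skew_mulA p q r : p ** (q ** r) = (p ** q) ** r.
Proof.
apply/polyP=> i; rewrite coef_skew coef_skew_rev.
pose coef3 (j k : nat) := p`_j * (al j q`_(i - j - k) * al (i - k) r`_k).
transitivity (\sum_(j < i.+1) \sum_(k < i.+1 | (k <= i - j)%N) coef3 j k).
  apply: eq_bigr => /= j _; rewrite coef_skew_rev al_sum big_distrr /=.
  rewrite (big_ord_narrow_leq (leq_subr _ _)); apply: eq_bigr => k _ /=.
  rewrite alM -iterD /coef3; congr (_ * (_ * iter _ _ _)).
  have := ltn_ord k; case: k => kk /= _; case: j => jj /= jlt; clear coef3; lia.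
rewrite (exchange_big_dep predT) //=; apply: eq_bigr => k _.
transitivity (\sum_(j < i.+1 | (j <= i - k)%N) coef3 j k).
  apply: eq_bigl => j; rewrite -ltnS -(ltnS j) -!subSn ?leq_ord //.
  by rewrite -subn_gt0 -(subn_gt0 j) -!subnDA addnC.
rewrite (big_ord_narrow_leq (leq_subr _ _)) coef_skew big_distrl /=.
by apply: eq_bigr => j _; rewrite /coef3 -!subnDA addnC mulrA.
Qed.

Lemma skew_mulDl p q r : (p + q) ** r = p ** r + q ** r.
Proof. by apply/polyP=> k; rewrite coefD !coef_skew -big_split; apply: eq_bigr => j _; rewrite coefD mulrDl. Qed.
Lemma skew_mulNl p r : (- p) ** r = - (p ** r).
Proof. by apply/polyP=> k; rewrite coefN !coef_skew -sumrN; apply: eq_bigr => j _; rewrite coefN mulNr. Qed.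
Lemma skew_mulBl p q r : (p - q) ** r = p ** r - q ** r.
Proof. by rewrite skew_mulDl skew_mulNl. Qed.
Lemma skew_mulDr p q r : r ** (p + q) = r ** p + r ** q.
Proof. by apply/polyP=> k; rewrite coefD !coef_skew -big_split; apply: eq_bigr => j _; rewrite coefD alD mulrDr. Qed.
Lemma skew_mulNr p r : r ** (- p) = - (r ** p).
Proof. by apply/polyP=> k; rewrite coefN !coef_skew -sumrN; apply: eq_bigr => j _; rewrite coefN alN mulrN. Qed.
Lemma skew_mulBr p q r : r ** (p - q) = r ** p - r ** q.
Proof. by rewrite skew_mulDr skew_mulNr. Qed.
Lemma skew_mul0r p : 0 ** p = 0.
Proof. by apply/polyP=> k; rewrite coef_skew coef0 big1 // => j _; rewrite coef0 mul0r. Qed.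
Lemma skew_mul0l p : p ** 0 = 0.
Proof. by apply/polyP=> k; rewrite coef_skew coef0 big1 // => j _; rewrite coef0 al0 mulr0. Qed.

Lemma coef_mono (c : R) n j : (c%:P * 'X^n)`_j = if j == n then c else 0.
Proof. by rewrite coefCM coefXn; case: eqP; rewrite ?mulr1 ?mulr0. Qed.

Lemma coef_skew_monor p c n k : (p ** (c%:P * 'X^n))`_k =
  if (n <= k)%N then p`_(k - n) * al (k - n) c else 0.
Proof.
rewrite coef_skew_rev; case: leqP => hn.
  have hn' : (n < k.+1)%N by rewrite ltnS.
  rewrite (bigD1 (Ordinal hn')) //= coef_mono eqxx big1 ?addr0 // => j hj.
  rewrite coef_mono; case: eqP => [e|]; last by rewrite al0 mulr0.
  by exfalso; move/eqP: hj; apply; apply: val_inj.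
rewrite big1 // => j _; rewrite coef_mono; case: eqP => [e|]; last by rewrite al0 mulr0.
by have := ltn_ord j; rewrite e ltnS leqNgt hn.
Qed.

Lemma coef_skew_monol q c n k : ((c%:P * 'X^n) ** q)`_k =
  if (n <= k)%N then c * al n q`_(k - n) else 0.
Proof.
rewrite coef_skew; case: leqP => hn.
  have hn' : (n < k.+1)%N by rewrite ltnS.
  rewrite (bigD1 (Ordinal hn')) //= coef_mono eqxx big1 ?addr0 // => j hj.
  rewrite coef_mono; case: eqP => [e|]; last by rewrite mul0r.
  by exfalso; move/eqP: hj; apply; apply: val_inj.
rewrite big1 // => j _; rewrite coef_mono; case: eqP => [e|]; last by rewrite mul0r.
by have := ltn_ord j; rewrite e ltnS leqNgt hn.
Qed.

Lemma polyC_mono (c : R) : c%:P = c%:P * 'X^0.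
Proof. by rewrite expr0 mulr1. Qed.

Lemma skew_mul1l p : 1 ** p = p.
Proof.
apply/polyP => k; rewrite -polyC1 polyC_mono coef_skew_monol leq0n subn0 /=.
by rewrite mul1r.
Qed.

Lemma skew_mul1r p : p ** 1 = p.
Proof.
apply/polyP => k; rewrite -polyC1 polyC_mono coef_skew_monor leq0n subn0.
by rewrite al1 mulr1.
Qed.

Lemma skew_mulX p : p ** 'X = p * 'X.
Proof.
have hX : ('X : {poly R}) = 1%:P * 'X^1 by rewrite polyC1 mul1r expr1.
apply/polyP => k; rewrite [in LHS]hX coef_skew_monor coefMX.
by case: k => [|k] //=; rewrite subn1 /= al1 mulr1.
Qed.

Lemma skew_mono_C c n r : (c%:P * 'X^n) ** r%:P = (c * al n r)%:P * 'X^n.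
Proof.
apply/polyP => k; rewrite [r%:P]polyC_mono coef_skew_monor subn0 !coef_mono.
by rewrite leq0n; case: eqP => [->|]; rewrite ?mul0r.
Qed.

Lemma coef_aX (a : R) s k : ((a%:P * 'X) ** s)`_k = if k is k'.+1 then a * alpha s`_k' else 0.
Proof.
have -> : a%:P * 'X = a%:P * 'X^1 by rewrite expr1.
rewrite coef_skew_monol; case: k => [|k] //=; by rewrite subn1.
Qed.

Variable a : R.
Local Notation f := (1 - skew_mul alpha a%:P (theta R)).
Local Notation P := (principal_right_ideal alpha f).
Definition beta c := a * alpha c.

Lemma fmul s : f ** s = s - (a%:P * 'X) ** s.
Proof. by rewrite skew_mulBl skew_mul1l /theta skew_mulX. Qed.

Lemma P0 : P 0.
Proof. by exists 0; rewrite skew_mul0l. Qed.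
Lemma PD x y : P x -> P y -> P (x + y).
Proof. by move=> [s ->] [t ->]; exists (s + t); rewrite skew_mulDr. Qed.
Lemma PN x : P x -> P (- x).
Proof. by move=> [s ->]; exists (- s); rewrite skew_mulNr. Qed.
Lemma PB x y : P x -> P y -> P (x - y).
Proof. by move=> hx hy; apply: PD hx (PN hy). Qed.
Lemma Pmul x t : P x -> P (x ** t).
Proof. by move=> [s ->]; exists (s ** t); rewrite skew_mulA. Qed.

Lemma Pright : is_right_ideal alpha P.
Proof. split; [exact: P0 | exact: PD | exact: Pmul]. Qed.

Lemma Pstep c n : P (c%:P * 'X^n - (beta c)%:P * 'X^(n.+1)).
Proof.
exists (c%:P * 'X^n); rewrite fmul; congr (_ - _); apply/polyP => k.
rewrite coef_aX coef_mono /beta; case: k => [|k] //=; rewrite coef_mono eqSS.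
by case: eqP => // _; rewrite rmorph0 mulr0.
Qed.

Lemma Ppush k c n : P (c%:P * 'X^n - (iter k beta c)%:P * 'X^(n + k)).
Proof.
elim: k => [|k IH]; first by rewrite addn0 subrr; exact: P0.
have := PD IH (Pstep (iter k beta c) (n + k)).
by rewrite addrA subrK addnS.
Qed.

Lemma reduce p : exists n c, P (p - c%:P * 'X^n).
Proof.
elim/poly_ind: p => [|q c [m [d IH]]]; first by exists 0%N, 0; rewrite mul0r subrr; exact: P0.
exists m.+1, (d + iter m.+1 beta c).
have h1 : P ((q - d%:P * 'X^m) ** 'X) by apply: Pmul.
rewrite skew_mulX mulrBl -mulrA -exprSr in h1.
have h2 := Ppush m.+1 c 0; rewrite add0n -polyC_mono in h2.
have := PD h1 h2; congr P.
by rewrite polyCD mulrDl; ring.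
Qed.

Lemma reduce_ge p M : exists n c, (M <= n)%N /\ P (p - c%:P * 'X^n).
Proof.
have [n [c h]] := reduce p; exists (n + M)%N, (iter M beta c); split; first exact: leq_addl.
have := PD h (Ppush M c n); congr P; ring.
Qed.

Lemma Nnorm_S k : Nnorm alpha k.+1 a = a * alpha (Nnorm alpha k a).
Proof.
rewrite /Nnorm big_ord_recl /= rmorph_prod; congr (_ * _); try by apply: eq_bigr.
Qed.

Lemma Nnorm_0 : Nnorm alpha 0 a = 1.
Proof. by rewrite /Nnorm big_ord0. Qed.

Lemma betan k c : iter k beta c = Nnorm alpha k a * al k c.
Proof.
elim: k => [|k IH] /=; first by rewrite Nnorm_0 mul1r.
by rewrite IH Nnorm_S /beta rmorphM mulrA.
Qed.

Lemma not_P1 : (forall n, (1 <= n)%N -> Nnorm alpha n a != 0) -> ~ P 1.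
Proof.
move=> HN [s hs].
have hk : forall k, s`_k = Nnorm alpha k a.
  elim=> [|k IH].
    have := congr1 (fun p : {poly R} => p`_0) hs; rewrite /= fmul coefB coef_aX coef1 subr0.
    by rewrite Nnorm_0.
  have := congr1 (fun p : {poly R} => p`_k.+1) hs; rewrite /= fmul coefB coef_aX coef1 /=.
  by rewrite Nnorm_S -IH => /eqP; rewrite eq_sym subr_eq0 => /eqP.
have := hk (size s); rewrite nth_default // => /esym/eqP.
case: (size s) => [|n]; first by rewrite Nnorm_0 oner_eq0.
by apply/negP; apply: HN.
Qed.

Variable g : R -> R.
Hypothesis ag : cancel alpha g.
Hypothesis ga : cancel g alpha.

Lemma gD x y : g (x + y) = g x + g y.
Proof. by rewrite -{1}(ga x) -{1}(ga y) -rmorphD ag. Qed.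
Lemma gM x y : g (x * y) = g x * g y.
Proof. by rewrite -{1}(ga x) -{1}(ga y) -rmorphM ag. Qed.
Lemma g0 : g 0 = 0.
Proof. by have := ag 0; rewrite rmorph0. Qed.
Lemma gN x : g (- x) = - g x.
Proof. by rewrite -{1}(ga x) -rmorphN ag. Qed.
Lemma gnD n x y : iter n g (x + y) = iter n g x + iter n g y.
Proof. by elim: n => //= n ->; rewrite gD. Qed.
Lemma gnM n x y : iter n g (x * y) = iter n g x * iter n g y.
Proof. by elim: n => //= n ->; rewrite gM. Qed.
Lemma gn0 n : iter n g 0 = 0.
Proof. by elim: n => //= n ->; rewrite g0. Qed.
Lemma gnB n x y : iter n g (x - y) = iter n g x - iter n g y.
Proof. by elim: n => //= n ->; rewrite gD gN. Qed.
Lemma al_gn n r : al n (iter n g r) = r.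
Proof. by elim: n r => // n IH r; rewrite iterSr iterS ga IH. Qed.
Lemma gn_al n r : iter n g (al n r) = r.
Proof. by elim: n r => // n IH r; rewrite iterSr iterS ag IH. Qed.

Lemma dichotomy (Hn : noetherian R)
  (Hsp : forall I : R -> Prop, is_ideal I -> (exists x, I x /\ x != 0) ->
     alpha_stable alpha I -> exists2 n, (1 <= n)%N & I (Nnorm alpha n a))
  (J : {poly R} -> Prop) : is_right_ideal alpha J -> (forall p, P p -> J p) ->
  (forall p, J p) \/ (forall n c, J (c%:P * 'X^n) -> c = 0).
Proof.
case=> J0 JD Jmul PJ.
have JN x : J x -> J (- x) by move=> /(Jmul _ (-1)); rewrite skew_mulNr skew_mul1r.
have JB x y : J x -> J y -> J (x - y) by move=> hx hy; apply: JD hx (JN _ hy).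
pose I n c := J (c%:P * 'X^n).
have Iid n : is_ideal (I n).
  split; rewrite /I.
  - by rewrite polyC0 mul0r.
  - by move=> x y hx hy; rewrite polyCD mulrDl; apply: JD.
  - move=> r x hx; have := Jmul _ (iter n g r)%:P hx.
    by rewrite skew_mono_C al_gn [x * r]mulrC.
have Imono n : ideal_sub (I n) (I n.+1).
  by move=> c hc; have := Jmul _ 'X hc; rewrite skew_mulX -mulrA -exprSr.
have [N HN] := Hn I Iid Imono.
have Imono' k n c : I n c -> I (n + k)%N c.
  by elim: k => [|k IH]; rewrite ?addn0 // addnS => h; apply: Imono; apply: IH.
have Ibeta c : I N c <-> I N (beta c).
  have hs := PJ _ (Pstep c N).
  split => h.
    apply/(HN N.+1 (leqnSn N)); rewrite /I.
    by have := JB _ _ h hs; congr J; ring.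
  have h' : I N.+1 (beta c) by apply/(HN N.+1 (leqnSn N)).
  by have := JD _ _ hs h'; rewrite subrK.
have Ig c : I N c -> I N (g c).
  move=> h; apply/Ibeta; rewrite /beta ga.
  by case: (Iid N) => _ _ Hm; apply: Hm.
have Igb c : I N (g c) -> I N c.
  pose K k x := I N (iter k g x).
  have Kid k : is_ideal (K k).
    split; rewrite /K.
    - by rewrite gn0; case: (Iid N).
    - by move=> x y hx hy; rewrite gnD; case: (Iid N) => _ HD _; apply: HD.
    - by move=> r x hx; rewrite gnM; case: (Iid N) => _ _ Hm; apply: Hm.
  have Kmono k : ideal_sub (K k) (K k.+1) by move=> x; rewrite /K iterS; exact: Ig.
  have [M HM] := Hn K Kid Kmono.
  move=> h; have := (HM M.+1 (leqnSn M) (al M c)).1; rewrite /K iterS gn_al; exact.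
have Hst : alpha_stable alpha (I N).
  move=> y; split.
    by case=> x hx <-; apply: Igb; rewrite ag.
  by move=> hy; exists (g y) => //; exact: Ig.
case: (classic (exists x, I N x /\ x != 0)) => [hne|hz].
  left; have [n n1 hn] := Hsp _ (Iid N) hne Hst.
  have down m : I N (Nnorm alpha m a) -> I N 1.
    elim: m => [|m IH]; first by rewrite Nnorm_0.
    by rewrite Nnorm_S => h; apply: IH; exact: (Ibeta _).2 h.
  have allc c : I N c.
    by have := down n hn; case: (Iid N) => _ _ Hm /(Hm c); rewrite mulr1.
  move=> p; have [m [c [hm hp]]] := reduce_ge p N.
  have hc : J (c%:P * 'X^m) by apply/(HN m hm); apply: allc.
  by have := JD _ _ (PJ _ hp) hc; rewrite subrK.
right => n c hc.
have h : I N c by apply/(HN (n + N)%N (leq_addl _ _)); apply: Imono'.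
by apply/eqP; apply/negPn/negP => hc0; apply: hz; exists c.
Qed.

Section Main.
Hypothesis Hn : noetherian R.
Hypothesis HN1 : forall n, (1 <= n)%N -> Nnorm alpha n a != 0.
Hypothesis Hsp : forall I : R -> Prop, is_ideal I -> (exists x, I x /\ x != 0) ->
     alpha_stable alpha I -> exists2 n, (1 <= n)%N & I (Nnorm alpha n a).

Lemma Pmaximal : maximal_right_ideal alpha P.
Proof.
split; first exact: Pright.
  by exists 1; apply: not_P1.
move=> J HJ PJ; have [hall|hinj] := dichotomy Hn Hsp HJ PJ; [right=> //|left=> p; split; last exact: PJ].
case: HJ => J0 JD Jmul.
have JN x : J x -> J (- x) by move=> /(Jmul _ (-1)); rewrite skew_mulNr skew_mul1r.
move=> hp; have [n [c hc]] := reduce p.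
have hJ : J (c%:P * 'X^n).
  by have := JD _ _ hp (JN _ (PJ _ hc)); rewrite opprB addrC subrK.
by have := hinj _ _ hJ => c0; move: hc; rewrite c0 polyC0 mul0r subr0.
Qed.

Lemma Pinj n c : P (c%:P * 'X^n) -> c = 0.
Proof.
have [h|h] := dichotomy Hn Hsp Pright (fun p hp => hp); last exact: h.
by case: (not_P1 HN1); apply: h.
Qed.

Lemma Nnzd k y : Nnorm alpha k a * y = 0 -> y = 0.
Proof.
move=> hy; have := Ppush k (iter k g y) 0.
rewrite betan al_gn hy polyC0 mul0r subr0 => /Pinj h.
by rewrite -(al_gn k y) h al0.
Qed.

Lemma coef_sC s r k : (s ** r%:P)`_k = s`_k * al k r.
Proof. by rewrite polyC_mono coef_skew_monor leq0n !subn0. Qed.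
Lemma coef_Cs s r k : (r%:P ** s)`_k = r * s`_k.
Proof. by rewrite polyC_mono coef_skew_monol leq0n !subn0. Qed.

Lemma al_comm i e x : al i (al e x) = al e (al i x).
Proof. by rewrite -!iterD addnC. Qed.

Lemma Pfaithful : infinite_order alpha -> faithful_quotient alpha P.
Proof.
move=> Hinf s0 Hs0.
suff: forall m (s : {poly R}), (size s <= m)%N -> (forall t, P (t ** s)) -> s = 0.
  by move/(_ (size s0) s0 (leqnn _) Hs0).
elim=> [|m IH] s hsz H; first by apply/eqP; rewrite -size_poly_eq0 -leqn0.
have [hm|hm] := leqP (size s) m; first exact: IH.
have hsize : size s = m.+1 by apply/eqP; rewrite eqn_leq hsz hm.
have hrel r k : s`_k * al k r = al m r * s`_k.
  pose s' := s ** r%:P - (al m r)%:P ** s.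
  have Hs' : forall t, P (t ** s').
    move=> t; rewrite skew_mulBr !skew_mulA; apply: PB.
      by apply: Pmul; apply: H.
    exact: H.
  have hs'sz : (size s' <= m)%N.
    apply/leq_sizeP => j hj; rewrite coefB coef_sC coef_Cs.
    case: (ltngtP j m) => [|hjm|->]; first by rewrite ltnNge hj.
      by rewrite nth_default ?mul0r ?mulr0 ?subrr // hsize.
    by rewrite mulrC subrr.
  have := IH s' hs'sz Hs'.
  move/(congr1 (fun p : {poly R} => p`_k)); rewrite coefB coef_sC coef_Cs coef0.
  by move/eqP; rewrite subr_eq0 => /eqP.
have hlow j : (j < m)%N -> s`_j = 0.
  move=> hj; set e := (m - j)%N.
  have he : (1 <= e)%N by rewrite /e subn_gt0.
  have hme : m = (e + j)%N by rewrite /e subnK // ltnW.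
  have hann z : (al e z - z) * s`_j = 0.
    have := hrel (iter j g z) j; rewrite al_gn hme iterD al_gn mulrC => h.
    by rewrite mulrBl -h subrr.
  pose G y := forall i, al i y * s`_j = 0 /\ iter i g y * s`_j = 0.
  have Gid : is_ideal G.
    split.
    - by move=> i; rewrite al0 gn0 mul0r.
    - move=> x y hx hy i; case: (hx i) => hx1 hx2; case: (hy i) => hy1 hy2.
      by rewrite alD gnD !mulrDl hx1 hx2 hy1 hy2 addr0.
    - move=> r x hx i; case: (hx i) => hx1 hx2.
      by rewrite alM gnM -!mulrA hx1 hx2 !mulr0.
  have [x0 hx0] := Hinf e he.
  have Gu : G (al e x0 - x0).
    move=> i; split.
      by rewrite alB al_comm hann.
    rewrite gnB -{1}(al_gn i x0) al_comm gn_al; exact: hann.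
  have Gst : alpha_stable alpha G.
    move=> y; split.
      case=> x hx <- i; split.
        by rewrite -iterSr; case: (hx i.+1).
      case: i => [|i]; first by case: (hx 1%N).
      by rewrite iterSr ag; case: (hx i).
    move=> hy; exists (g y); last exact: ga.
    move=> i; split.
      case: i => [|i]; first by case: (hy 1%N).
      by rewrite iterSr ga; case: (hy i).
    by rewrite -iterSr; case: (hy i.+1).
  have hu : al e x0 - x0 != 0 by rewrite subr_eq0.
  have [n _ hn] := Hsp Gid (ex_intro _ _ (conj Gu hu)) Gst.
  by apply: (Nnzd (k:=n)); case: (hn 0%N).
have hs : s = (s`_m)%:P * 'X^m.
  apply/polyP => k; rewrite coef_mono; case: (ltngtP k m) => [hk|hk|->]; last by [].
    by rewrite hlow // (negbTE (ltn_neq hk)).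
  by rewrite nth_default ?hsize // (gtn_eqF hk).
have := H 1; rewrite skew_mul1l {1}hs => /Pinj h0.
by rewrite hs h0 polyC0 mul0r.
Qed.

End Main.

End S.

Theorem proposition4p3 (R : comNzRingType) (alpha : {rmorphism R -> R}) (a : R) :
  noetherian R ->
  bijective alpha ->
  alpha_special_elt alpha a ->
  maximal_right_ideal alpha
    (principal_right_ideal alpha (1 - skew_mul alpha a%:P (theta R))) /\
  (infinite_order alpha ->
   simple_quotient alpha
     (principal_right_ideal alpha (1 - skew_mul alpha a%:P (theta R))) /\
   faithful_quotient alpha
     (principal_right_ideal alpha (1 - skew_mul alpha a%:P (theta R)))).
Proof.
move=> Hn [g ag ga] [HN1 Hsp].
have M := Pmaximal ag ga Hn HN1 Hsp.
split => // Hinf; split; first by case: M.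
exact: Pfaithful ag ga Hn HN1 Hsp Hinf.
Qed.
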